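(* Let $\mathcal{X}$ and $\mathcal{A}=\mathcal{B}$ be finite sets and let $P_{XAB}$ be a probability distribution on $\mathcal{X}\times\mathcal{A}\times\mathcal{B}$ such that (i) the marginal $P_X$ is uniform on $\mathcal{X}$; (ii) $P_{AB|X}=P_{A|X}P_{B|X}$, i.e. $P_{XAB}(x,a,b)=P_X(x)P_{A|X}(a|x)P_{B|X}(b|x)$; (iii) $P_{A|X}=P_{B|X}$. For functions $f\colon\mathcal{A}\to\mathcal{X}$, $g\colon\mathcal{B}\to\mathcal{X}$ let $$W(f,g)=\sum_{x\in\mathcal{X},a\in\mathcal{A},b\in\mathcal{B}}P_{XAB}(x,a,b)\,\delta[f(a)=g(b)=x].$$ Then there exists a function $f\colon\mathcal{A}\to\mathcal{X}$ such that $W(f,f)=\max_{f',g'}W(f',g')$, where the maximum ranges over all pairs of functions $f'\colon\mathcal{A}\to\mathcal{X}$, $g'\colon\mathcal{B}\to\mathcal{X}$. In other words, the classical LSSD game defined by $P_{XAB}$ has an optimal deterministic strategy that is symmetric.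
   Context: $\delta[\cdot]$ denotes the indicator function, equal to $1$ if its argument is true and $0$ otherwise. In the (two-player, classical) local simultaneous state discrimination (LSSD) game defined by $P_{XAB}$, a referee samples $(x,a,b)\sim P_{XAB}$ and gives $a$ to Alice and $b$ to Bob; without communicating, they output guesses of $x$ and win iff both guesses equal $x$. A deterministic strategy is a pair of functions $(f,g)$ with winning probability $W(f,g)$; it is symmetric if $f=g$. *)

(* Defs.v *)
From mathcomp Require Import all_boot all_order all_algebra.
Set Implicit Arguments. Unset Strict Implicit. Unset Printing Implicit Defensive.
Import Order.TTheory GRing.Theory Num.Theory.
Local Open Scope ring_scope.

Section LSSD.
Variables (R : realFieldType) (X A B : finType).
Variable P : X -> A -> B -> R.

Definition is_distr := (forall x a b, 0 <= P x a b) /\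
  \sum_(x : X) \sum_(a : A) \sum_(b : B) P x a b = 1.

Definition PX (x : X) : R := \sum_(a : A) \sum_(b : B) P x a b.
Definition PXA (x : X) (a : A) : R := \sum_(b : B) P x a b.
Definition PXB (x : X) (b : B) : R := \sum_(a : A) P x a b.
Definition PAgX (a : A) (x : X) : R := PXA x a / PX x.
Definition PBgX (b : B) (x : X) : R := PXB x b / PX x.

Definition W (f : A -> X) (g : B -> X) : R :=
  \sum_(x : X) \sum_(a : A) \sum_(b : B)
     P x a b * (((f a == x) && (g b == x)) : bool)%:R.
End LSSD.

(* Main.v *)
Require Import Defs.
From mathcomp Require Import all_boot all_order all_algebra.
From mathcomp Require Import ring lra.
Import Order.TTheory GRing.Theory Num.Theory.
Local Open Scope ring_scope.

Definition U {R : realFieldType} {X A : finType} (P : X -> A -> A -> R)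
  (f : A -> X) (x : X) : R := \sum_(a : A) PAgX P a x * ((f a == x) : bool)%:R.

Lemma W_eq (R : realFieldType) (X A : finType) (P : X -> A -> A -> R) :
  (forall x a b, P x a b = PX P x * PAgX P a x * PBgX P b x) ->
  (forall x a, PAgX P a x = PBgX P a x) ->
  forall f g, W P f g = \sum_x PX P x * (U P f x * U P g x).
Proof.
move=> H3 H4 f g; rewrite /W; apply: eq_bigr => x _.
under eq_bigr do under eq_bigr do rewrite H3 -H4.
move: (PX P x) => c; rewrite /U.
rewrite big_distrl mulr_sumr; apply: eq_bigr => a _ /=.
rewrite big_distrr mulr_sumr; apply: eq_bigr => b _ /=.
rewrite -mulnb natrM; ring.
Qed.

Theorem mainTheorem1 (R : realFieldType) (X A : finType) (P : X -> A -> A -> R) :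
  is_distr P ->
  (forall x : X, PX P x = #|X|%:R^-1) ->
  (forall x a b, P x a b = PX P x * PAgX P a x * PBgX P b x) ->
  (forall x a, PAgX P a x = PBgX P a x) ->
  exists f : A -> X, forall f' g' : A -> X, W P f' g' <= W P f f.
Proof.
move=> [H0 H1] _ H3 H4.
have [x0 _] : exists x0 : X, true.
  case: (pickP (@predT X)) => [x0|Hn]; first by exists x0.
  move: H1; rewrite big_pred0 //; move=> /eqP; rewrite eq_sym oner_eq0.
  done.
have key : forall f g, 2 * W P f g <= W P f f + W P g g.
  move=> f g; rewrite !(@W_eq _ _ _ P H3 H4) mulr_sumr -big_split /=.
  apply: ler_sum => x _.
  have hp : 0 <= PX P x by apply: sumr_ge0 => a _; apply: sumr_ge0.
  rewrite -subr_ge0.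
  have -> : PX P x * (U P f x * U P f x) + PX P x * (U P g x * U P g x) -
     2 * (PX P x * (U P f x * U P g x)) = PX P x * (U P f x - U P g x) ^+ 2
    by ring.
  by apply: mulr_ge0 => //; apply: sqr_ge0.
case: (@arg_maxP _ _ {ffun A -> X} [ffun=> x0] xpredT (fun f => W P f f) isT)
  => fm _ Hmax.
exists fm => f' g'.
have h1 := Hmax [ffun a => f' a] isT.
have h2 := Hmax [ffun a => g' a] isT.
have e1 : W P [ffun a => f' a] [ffun a => f' a] = W P f' f'.
  by rewrite /W; do 3 (apply: eq_bigr => ? _); rewrite !ffunE.
have e2 : W P [ffun a => g' a] [ffun a => g' a] = W P g' g'.
  by rewrite /W; do 3 (apply: eq_bigr => ? _); rewrite !ffunE.
rewrite e1 in h1; rewrite e2 in h2.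
move: h1 h2 => /= h1 h2.
have := key f' g'; lra.
Qed.
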